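(* For any prime power $q$, there exists a $(q^2+q+1,\ q^2+q+1,\ q^2,\ q^2+q+1)$ placement delivery array, which realizes a $(q^2+q+1)$-division $(K=q^2+q+1,M,N)$ coded caching scheme with memory ratio $\frac{M}{N}=\frac{q^2}{q^2+q+1}$ and transmission load $R=1$.
   Context: A $(K,F,Z,S)$ placement delivery array (PDA) is an $F\times K$ array $\mathbf{P}=(p_{j,k})$ with entries from $\{*\}\cup\{1,\dots,S\}$ such that: (C1) each column contains exactly $Z$ stars; (C2) each integer of $\{1,\dots,S\}$ occurs at least once; (C3) for any two distinct entries $p_{j_1,k_1}=p_{j_2,k_2}=s$ (an integer) we have $j_1\neq j_2$, $k_1\neq k_2$, and $p_{j_1,k_2}=p_{j_2,k_1}=*$. A $(K,M,N)$ coded caching system consists of a server storing $N$ equal-size files and $K$ users each with a cache of size $M$ files, connected by an error-free shared broadcast link. An $F$-division scheme splits each file into $F$ equal-size packets placed (uncoded) in caches independently of demands; in delivery each user requests one file and the server broadcasts XORs of packets so every user decodes its request. The load $R$ is the worst-case normalized broadcast size; $M/N$ is the memory ratio. A $(K,F,Z,S)$ PDA realizes an $F$-division scheme with $M/N=Z/F$ and $R=S/F$. *)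

(* Defs.v *)
From mathcomp Require Import all_boot all_order all_algebra.
Unset Printing Implicit Defensive.

(* A (K,F,Z,S) placement delivery array: an F x K array whose entries are
   either a star (None) or an integer s in {1..S}, encoded as Some s with
   s : 'I_S (i.e. integer s+1 is represented by the ordinal s).
   Rows are indexed by 'I_F (packets), columns by 'I_K (users). *)
Definition is_PDA (K F Z S : nat) (P : 'I_F -> 'I_K -> option 'I_S) : Prop :=
  (forall k : 'I_K, #|[set j : 'I_F | P j k == None]| = Z) /\
  (forall s : 'I_S, exists (j : 'I_F) (k : 'I_K), P j k = Some s) /\
  (forall (j1 j2 : 'I_F) (k1 k2 : 'I_K) (s : 'I_S),
      (j1, k1) != (j2, k2) -> P j1 k1 = Some s -> P j2 k2 = Some s ->
      [/\ j1 != j2, k1 != k2, P j1 k2 = None & P j2 k1 = None]).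

Definition is_PDA_exists (K F Z S : nat) : Prop :=
  exists P : 'I_F -> 'I_K -> option 'I_S, is_PDA K F Z S P.

Definition pda_memory_ratio (F Z : nat) : rat := (Z%:R / F%:R)%R.
Definition pda_load (F S : nat) : rat := (S%:R / F%:R)%R.

Definition prime_power (q : nat) : Prop :=
  exists p e : nat, prime p /\ 0 < e /\ q = p ^ e.

(* Main.v *)
From Stdlib Require Import ZArith Lia.
Local Open Scope Z_scope.
Lemma small_mult n w v : 0 < n -> -n < v < n -> v = n*w -> w = 0.
Proof. intros Hn Hv E. destruct (Z.lt_trichotomy w 0) as [H|[H|H]]; [|exact H|]; nia. Qed.
Lemma coreZ q n j1 k1 j2 k2 d1 d2 x e1 e2 e3 l :
 n = q*q+q+1 -> 0<=q -> 0<=j1<n -> 0<=j2<n -> 0<=k1<n -> 0<=k2<n ->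
 0<=d1<=q -> 0<=d2<=q -> 0<=x<=q ->
 k1 - j1 = e1*n + d1 -> k2 - j2 = e2*n+d2 -> k2 - j1 = e3*n + x ->
 (q*q+1)*j1 + (q+1)*k1 - ((q*q+1)*j2 + (q+1)*k2) = l*n -> j1 = j2 /\ k1 = k2.
Proof.
intros Hn Hq Hj1 Hj2 Hk1 Hk2 Hd1 Hd2 Hx E1 E2 E3 L.
assert (La : (n-q)*j1 + (q+1)*k1 - ((n-q)*j2 + (q+1)*k2) = l*n).
{ replace (n-q) with (q*q+1) by (rewrite Hn; ring). exact L. }
clear L.
assert (E1' : (q+1)*(k1 - j1) = (q+1)*(e1*n + d1)) by (rewrite E1; reflexivity).
assert (E2' : (q+1)*(k2 - j2) = (q+1)*(e2*n + d2)) by (rewrite E2; reflexivity).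
set (w := (j2 - j1) + l - (q+1)*e1 + (q+1)*e2 - e2 + e3).
assert (HV : (q+1)*d1 - q*d2 - x = n*w).
{ replace (n*w) with (n*(j2-j1-(q+1)*e1+(q+1)*e2-e2+e3) + l*n) by (unfold w; ring).
  rewrite <- La.
  replace d1 with (k1 - j1 - e1*n) by lia.
  replace d2 with (k2 - j2 - e2*n) by lia.
  replace x with (k2 - j1 - e3*n) by lia.
  ring. }
assert (Hqd1 : 0 <= q*d1 <= q*q) by (split; [apply Z.mul_nonneg_nonneg|apply Z.mul_le_mono_nonneg_l]; lia).
assert (Hqd2 : 0 <= q*d2 <= q*q) by (split; [apply Z.mul_nonneg_nonneg|apply Z.mul_le_mono_nonneg_l]; lia).
assert (Hw : w = 0) by (apply (small_mult n w ((q+1)*d1 - q*d2 - x)); lia).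
rewrite Hw in HV.
assert (Hd : d1 = d2).
{ assert (q*(d1-d2) = x - d1) by lia.
  destruct (Z.lt_trichotomy d1 d2) as [Hlt|[Hlt|Hlt]]; [|exact Hlt|].
  - assert (q*(d1-d2) <= q*(-1)) by (apply Z.mul_le_mono_nonneg_l; lia). lia.
  - assert (q*1 <= q*(d1-d2)) by (apply Z.mul_le_mono_nonneg_l; lia). lia. }
subst d2.
set (w' := - (l - j1 + j2 - (q+1)*e1 + (q+1)*e2)).
assert (HJ : j2 - j1 = n * w').
{ replace (n*w') with (- (l*n) - n*(- j1 + j2 - (q+1)*e1 + (q+1)*e2)) by (unfold w'; ring).
  rewrite <- La.
  replace d1 with (k1 - j1 - e1*n) in E2 by lia.
  assert (k2 = k1 - j1 - e1 * n + e2 * n + j2) by lia. subst k2. ring. }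
assert (Hw' : w' = 0) by (apply (small_mult n w' (j2-j1)); lia).
assert (j1 = j2) by lia. subst j2.
assert (HK : k1 - k2 = n * (e1 - e2)) by lia.
assert (e1 - e2 = 0) by (apply (small_mult n _ (k1-k2)); lia).
split; [reflexivity|lia].
Qed.
Local Close Scope Z_scope.

Require Import Defs.
From mathcomp Require Import all_boot all_order all_algebra.
From mathcomp Require Import zify.
Local Close Scope Z_scope.

Lemma coreN q j1 k1 j2 k2 d1 d2 x m1 m2 m3 l1 l2 s :
  let n := q ^ 2 + q + 1 in
  j1 < n -> j2 < n -> k1 < n -> k2 < n -> d1 <= q -> d2 <= q -> x <= q ->
  k1 + n - j1 = m1 * n + d1 -> k2 + n - j2 = m2 * n + d2 ->
  k2 + n - j1 = m3 * n + x ->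
  (q ^ 2+1)*j1 + (q+1)*k1 = l1 * n + s -> (q ^ 2+1)*j2 + (q+1)*k2 = l2 * n + s ->
  j1 = j2 /\ k1 = k2.
Proof.
move=> n Hj1 Hj2 Hk1 Hk2 Hd1 Hd2 Hx E1 E2 E3 L1 L2.
have H := @coreZ (Z.of_nat q) (Z.of_nat n) (Z.of_nat j1) (Z.of_nat k1) (Z.of_nat j2)
  (Z.of_nat k2) (Z.of_nat d1) (Z.of_nat d2) (Z.of_nat x)
  (Z.of_nat m1 - 1) (Z.of_nat m2 - 1) (Z.of_nat m3 - 1) (Z.of_nat l1 - Z.of_nat l2).
move: Hj1 Hj2 Hk1 Hk2 E1 E2 E3 L1 L2; rewrite /n -!mulnn => Hj1 Hj2 Hk1 Hk2 E1 E2 E3 L1 L2.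
have [A B] : (Z.of_nat j1 = Z.of_nat j2 /\ Z.of_nat k1 = Z.of_nat k2)%Z.
  apply: H.
  all: lia.
Qed.

Lemma injN n a j1 j2 m1 m2 r : j1 < n -> j2 < n ->
  a + n - j1 = m1 * n + r -> a + n - j2 = m2 * n + r -> j1 = j2.
Proof.
move=> H1 H2 E1 E2.
have H := @small_mult (Z.of_nat n) (Z.of_nat m1 - Z.of_nat m2) (Z.of_nat j2 - Z.of_nat j1).
have : (Z.sub (Z.of_nat m1) (Z.of_nat m2) = Z0).
  apply: H.
  all: lia.
Qed.

Lemma npos q : 0 < q ^ 2 + q + 1.
Proof. by rewrite addn1. Qed.

Definition Pq (q : nat) (j k : 'I_(q ^ 2 + q + 1)) : option 'I_(q ^ 2 + q + 1) :=
  if (k + (q ^ 2 + q + 1) - j) %% (q ^ 2 + q + 1) <= q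
  then Some (Ordinal (ltn_pmod ((q ^ 2 + 1) * j + (q + 1) * k) (npos q)))
  else None.
Arguments Pq {q}.

Lemma count_gt q m : count (fun d => q < d) (iota 0 (q + 1 + m)) = m.
Proof.
rewrite iotaD count_cat.
rewrite (@eq_in_count _ _ pred0) ?count_pred0; last first.
  by move=> d; rewrite mem_iota /= => H; apply/negbTE; lia.
rewrite (@eq_in_count _ _ predT) ?count_predT ?size_iota //.
by move=> d; rewrite mem_iota /= => /ssrbool.andP [H _]; lia.
Qed.

Lemma C1 q (k : 'I_(q ^ 2 + q + 1)) :
  #|[set j | Pq j k == None]| = q ^ 2.
Proof.
pose f := fun j : 'I_(q ^ 2 + q + 1) =>
  Ordinal (ltn_pmod (k + (q ^ 2 + q + 1) - j) (npos q)).
have finj : injective f.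
  move=> j1 j2 /(congr1 val) /= E.
  have := divn_eq (k + (q ^ 2 + q + 1) - j1) (q ^ 2 + q + 1).
  have := divn_eq (k + (q ^ 2 + q + 1) - j2) (q ^ 2 + q + 1).
  rewrite E.
  move=> E2 E1; apply: val_inj => /=.
  have Hj1 := ltn_ord j1; have Hj2 := ltn_ord j2; have Hk := ltn_ord k.
  exact: (@injN (q ^ 2 + q + 1) k (nat_of_ord j1) (nat_of_ord j2) _ _ _ Hj1 Hj2 E1 E2).
have -> : [set j | Pq j k == None] = f @^-1: [set d : 'I_(q ^ 2 + q + 1) | q < d].
  apply/setP => j; rewrite !inE /Pq /=.
  by case: ifP => H; rewrite ?ltnNge ?H.
rewrite card_preimset // cardsE.
rewrite cardE /enum_mem size_filter -enumT.
rewrite (_ : count _ _ = count (fun d => q < d) (map val (enum 'I_(q ^ 2 + q + 1)))); last first.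
  rewrite count_map; apply: eq_count => d /=.
  by rewrite unfold_in /=; apply/idP/idP => /eqnP H; lia.
rewrite (val_enum_ord (q ^ 2 + q + 1)).
have E : q ^ 2 + q + 1 = q + 1 + q ^ 2 by lia.
by rewrite E count_gt.
Qed.

Lemma PqSome q (j k s : 'I_(q ^ 2 + q + 1)) : Pq j k = Some s ->
  (k + (q ^ 2 + q + 1) - j) %% (q ^ 2 + q + 1) <= q /\
  val s = ((q ^ 2 + 1) * j + (q + 1) * k) %% (q ^ 2 + q + 1).
Proof. by rewrite /Pq; case: ifP => // H [<-]. Qed.

Lemma cross q (j1 k1 j2 k2 s : 'I_(q ^ 2 + q + 1)) :
  (j1, k1) != (j2, k2) -> Pq j1 k1 = Some s -> Pq j2 k2 = Some s -> Pq j1 k2 = None.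
Proof.
move=> Hne /PqSome [H1 S1] /PqSome [H2 S2].
rewrite /Pq; case: ifP => // H3; exfalso.
move: Hne; rewrite xpair_eqE; apply/negP/negPn/ssrbool.andP.
have E1 := divn_eq (k1 + (q ^ 2 + q + 1) - j1) (q ^ 2 + q + 1).
have E2 := divn_eq (k2 + (q ^ 2 + q + 1) - j2) (q ^ 2 + q + 1).
have E3 := divn_eq (k2 + (q ^ 2 + q + 1) - j1) (q ^ 2 + q + 1).
have L1 := divn_eq ((q ^ 2 + 1) * j1 + (q + 1) * k1) (q ^ 2 + q + 1).
have L2 := divn_eq ((q ^ 2 + 1) * j2 + (q + 1) * k2) (q ^ 2 + q + 1).
rewrite -S1 in L1; rewrite -S2 in L2.
have Hj1 := ltn_ord j1; have Hj2 := ltn_ord j2.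
have Hk1 := ltn_ord k1; have Hk2 := ltn_ord k2.
have [/val_inj -> /val_inj ->] := @coreN q j1 k1 j2 k2 _ _ _ _ _ _ _ _ _ Hj1 Hj2 Hk1 Hk2 H1 H2 H3 E1 E2 E3 L1 L2.
by rewrite !eqxx.
Qed.

Theorem corollary2 (q : nat) :
  prime_power q ->
  is_PDA_exists (q ^ 2 + q + 1) (q ^ 2 + q + 1) (q ^ 2) (q ^ 2 + q + 1) /\
  pda_memory_ratio (q ^ 2 + q + 1) (q ^ 2)
    = ((q ^ 2)%:R / (q ^ 2 + q + 1)%:R)%R /\
  pda_load (q ^ 2 + q + 1) (q ^ 2 + q + 1) = 1%R.
Proof.
move=> _; split; last split.
- exists (@Pq q); split; [|split].
  + exact: C1.
  + move=> s; exists s, s; rewrite /Pq addKn modnn leq0n; congr Some; apply: val_inj => /=.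
    have E : (q ^ 2 + 1) * s + (q + 1) * s = s * (q ^ 2 + q + 1) + s.
      move: (nat_of_ord s) => t; rewrite -!mulnn; lia.
    by rewrite E modnMDl modn_small.
  + move=> j1 j2 k1 k2 s Hne P1 P2.
    have C12 := @cross q j1 k1 j2 k2 s Hne P1 P2.
    have Hne' : (j2, k2) != (j1, k1) by rewrite eq_sym.
    have C21 := @cross q j2 k2 j1 k1 s Hne' P2 P1.
    split => //.
    * by apply/eqP => E; move: C12; rewrite E P2.
    * by apply/eqP => E; move: C12; rewrite -E P1.
- by [].
- by rewrite /pda_load GRing.divff // Num.Theory.pnatr_eq0 addn1.
Qed.
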